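(* Let $C$ be an $X$-completely transitive code in $H(m,q)$. Then $(m+1)|X|\ge q^m$.
   Context: $H(m,q)$ is the Hamming graph whose vertices are the $m$-tuples over an alphabet $Q$ of size $q$, two vertices adjacent iff they differ in exactly one coordinate; a code is a set $C$ of vertices, $d$ is Hamming distance, $\rho=\max_\alpha d(\alpha,C)$ its covering radius and $C_i=\{\alpha: d(\alpha,C)=i\}$. For a subgroup $X$ of the automorphism group of $H(m,q)$ stabilising $C$ setwise, $C$ is $X$-completely transitive if $X$ acts transitively on each of $C,C_1,\dots,C_\rho$. *)

(* Defs.v *)
From mathcomp Require Import all_boot all_order all_fingroup.
Set Implicit Arguments. Unset Strict Implicit. Unset Printing Implicit Defensive.

Definition hvert (m q : nat) := {ffun 'I_m -> 'I_q}.

Definition hdist (m q : nat) (x y : hvert m q) : nat := #|[set i | x i != y i]|.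

Definition hadj (m q : nat) (x y : hvert m q) : bool := hdist x y == 1.

Definition hamming_aut (m q : nat) : {set {perm hvert m q}} :=
  [set g : {perm hvert m q} | [forall x, forall y, hadj (g x) (g y) == hadj x y]].

(* distance from a vertex to a code (meaningful for nonempty C; hdist <= m) *)
Definition dist_code (m q : nat) (C : {set hvert m q}) (a : hvert m q) : nat :=
  \big[minn/m]_(c in C) hdist a c.

Definition cov_radius (m q : nat) (C : {set hvert m q}) : nat :=
  \max_(a : hvert m q) dist_code C a.

Definition code_layer (m q : nat) (C : {set hvert m q}) (i : nat) : {set hvert m q} :=
  [set a | dist_code C a == i].

Definition completely_transitive (m q : nat) (X : {group {perm hvert m q}})
    (C : {set hvert m q}) : Prop :=
  [/\ X \subset hamming_aut m q,
      (forall g, g \in X -> [set g x | x in C] = C) &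
      forall i, i <= cov_radius C -> [transitive X, on code_layer C i | 'P]].

(* Main.v *)
Require Import Defs.
From mathcomp Require Import all_boot all_order all_fingroup.

Lemma dist_code_le (m q : nat) (C : {set hvert m q}) a : dist_code C a <= m.
Proof.
rewrite /dist_code; apply: (big_ind (fun x => x <= m)) => //.
by move=> x y hx _; rewrite geq_min hx.
by move=> i _; rewrite /hdist; apply: leq_trans (max_card _) _; rewrite card_ord.
Qed.

Theorem lemma2p9 (m q : nat) (C : {set hvert m q}) (X : {group {perm hvert m q}}) :
  C != set0 -> completely_transitive X C -> q ^ m <= m.+1 * #|X|.
Proof.
move=> _ [_ _ HT].
have -> : q ^ m = #|hvert m q| by rewrite /hvert card_ffun !card_ord.
pose f := fun a : hvert m q => (inord (dist_code C a) : 'I_m.+1).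
have -> : #|hvert m q| = \sum_(a : hvert m q) 1 by rewrite sum1_card.
rewrite (partition_big f predT) //=.
have -> : m.+1 * #|X| = \sum_(i < m.+1) #|X| by rewrite sum_nat_const card_ord.
apply: leq_sum => i _.
rewrite sum1_card.
case: (pickP [pred a | f a == i]) => [a Ha|H0]; last first.
  by rewrite (eq_card0 H0).
have Hsub : [pred a | f a == i] \subset code_layer C i.
  apply/subsetP => b; rewrite !inE /f => /eqP <-.
  by rewrite inordK ?ltnS ?dist_code_le.
apply: (leq_trans (subset_leq_card Hsub)).
have Hai : a \in code_layer C i by exact: (subsetP Hsub).
have Hi : i <= cov_radius C.
  move: Hai; rewrite inE => /eqP <-; exact: leq_bigmax.
by rewrite -(atransP (HT _ Hi) _ Hai) leq_imset_card.
Qed.
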